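(* Let $d\ge 2$ and let $\mathcal{S}^{(d)}_2$ be the complementary channel of the $1\to 2$ universal qudit cloner. Then the following operators form a set of rank-one Kraus operators for $\mathcal{S}^{(d)}_2$: $$\tfrac{1}{\sqrt{d+1}}|1\rangle\langle1|,\ \dots,\ \tfrac{1}{\sqrt{d+1}}|d\rangle\langle d|,\qquad \tfrac{1}{\sqrt{4^{d-1}(d+1)}}\,|\psi(\vec n)\rangle\langle\psi(\vec n)|\,\sigma_z(\vec n),$$ where $|\psi(\vec n)\rangle=\sum_{j=1}^d i^{n_j}|j\rangle$, $\sigma_z(\vec n)=\sum_{j=1}^d(-1)^{n_j}|j\rangle\langle j|$, and $\vec n=(n_1,\dots,n_d)$ ranges over all vectors with $n_1=0$ and $n_j\in\{0,1,2,3\}$ for $j\ge2$ (here $i=\sqrt{-1}$). That is, $\mathcal{S}^{(d)}_2(\rho)=\sum_m E_m\rho E_m^\dagger$ and $\sum_m E_m^\dagger E_m=I$ for this family $\{E_m\}$.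
   Context: The $1\to 2$ universal qudit cloner is the isometry $|l\rangle\otimes R\mapsto\sum_{j=1}^d\sqrt{\tfrac{1+\delta_{lj}}{d+1}}\,|\vec e_l+\vec e_j\rangle\otimes R_j$, where $|\vec m\rangle$ is the normalized completely symmetric two-qudit state with occupation vector $\vec m$ and $\{R_j\}_{j=1}^d$ are orthonormal auxiliary (environment) states. Its complementary channel $\mathcal{S}^{(d)}_2$ is obtained by applying the isometry and tracing out the two-qudit clone system; the environment is identified with $\mathbb{C}^d$ via $R_j\leftrightarrow|j\rangle$. With this identification $\mathcal{S}^{(d)}_2(\rho)=\frac{1}{d+1}\big(\mathrm{Tr}(\rho)I+\rho^{T}\big)$, the transpose taken in the basis $\{|j\rangle\}$. *)

(* Defs.v *)
(* Complex scalars: an arbitrary numClosedFieldType C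
   (covers algC and the complex numbers R[i] of any real closed field). *)
From HB Require Import structures.
From mathcomp Require Import all_boot all_order all_algebra.
Set Implicit Arguments. Unset Strict Implicit. Unset Printing Implicit Defensive.
Import Order.TTheory GRing.Theory Num.Theory.
Local Open Scope ring_scope.

Section Cloner.
Variables (C : numClosedFieldType) (d : nat).

Definition adjmx (m n : nat) (A : 'M[C]_(m, n)) : 'M[C]_(n, m) :=
  map_mx Num.conj (A^T).

(* Coefficient <a b | e_l + e_j> of the normalized completely symmetric
   two-qudit state with occupation vector e_l + e_j. *)
Definition symc (l j a b : 'I_d) : C :=
  if l == j then ((a == l) && (b == l))%:R
  else (((a == l) && (b == j)) + ((a == j) && (b == l)))%:R / sqrtC 2%:R.

(* Coefficient of |a b> (x) R_r in the image of |l> under the 1->2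
   universal cloner isometry  |l> |-> sum_j sqrt((1+delta_lj)/(d+1)) |e_l+e_j> R_j. *)
Definition cloner_iso (l a b r : 'I_d) : C :=
  sqrtC ((1 + (l == r))%:R / (d.+1)%:R) * symc l r a b.

(* Complementary channel S_2^(d): apply the isometry and trace out the two
   clone qudits (indices a b); the environment R_r is identified with |r>. *)
Definition cloner_compl (rho : 'M[C]_d) : 'M[C]_d :=
  \matrix_(r, r') \sum_(a < d) \sum_(b < d) \sum_(l < d) \sum_(l' < d)
     cloner_iso l a b r * rho l l' * (cloner_iso l' a b r')^*.

Definition Ediag (j : 'I_d) : 'M[C]_d :=
  (sqrtC (d.+1)%:R)^-1 *: delta_mx j j.

Definition psi (n : {ffun 'I_d -> 'I_4}) : 'cV[C]_d :=
  \col_j ('i ^+ (n j)).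

Definition sigz (n : {ffun 'I_d -> 'I_4}) : 'M[C]_d :=
  diag_mx (\row_j ((-1) ^+ (n j))).

Definition Evec (n : {ffun 'I_d -> 'I_4}) : 'M[C]_d :=
  (sqrtC (4 ^ d.-1 * d.+1)%:R)^-1 *: (psi n *m adjmx (psi n) *m sigz n).

(* n_1 = 0 (first coordinate, index 0 in 'I_d) *)
Definition first0 (n : {ffun 'I_d -> 'I_4}) : bool :=
  [forall i : 'I_d, (val i == 0%N) ==> (val (n i) == 0%N)].

End Cloner.

Arguments symc {C d}.
Arguments cloner_iso {C d}.
Arguments cloner_compl {C d}.
Arguments Ediag {C d}.
Arguments psi {C d}.
Arguments sigz {C d}.
Arguments Evec {C d}.
Arguments first0 {d}.

(* Main.v *)
Require Import Defs.
From HB Require Import structures.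
From mathcomp Require Import all_boot all_order all_algebra.
From mathcomp Require Import ring zify.
Set Implicit Arguments. Unset Strict Implicit. Unset Printing Implicit Defensive.
Import Order.TTheory GRing.Theory Num.Theory.
Local Open Scope ring_scope.

Section Aux.
Variable C : numClosedFieldType.

Lemma i4 : ('i : C) ^+ 4 = 1.
Proof. by rewrite (exprM _ 2 2) sqrCi sqrrN expr1n. Qed.

Lemma iexp_mod (m : nat) : ('i : C) ^+ m = 'i ^+ (m %% 4).
Proof.
by rewrite {1}(divn_eq m 4) exprD mulnC exprM i4 expr1n mul1r.
Qed.

Lemma sum4 (m : nat) :
  \sum_(k < 4) ('i : C) ^+ (m * k) = if (4 %| m)%N then 4%:R else 0.
Proof.
under eq_bigr do rewrite exprM.
rewrite !big_ord_recl big_ord0 /= /bump /= !add1n addr0 expr0 expr1.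
rewrite (iexp_mod m) /dvdn.
have h := sqrCi C.
have : (m %% 4 < 4)%N by rewrite ltn_pmod.
case: (m %% 4)%N => [|[|[|[|//]]]] _ /=;
  rewrite -!exprM /= ?(iexp_mod (_ * _)) /= ?expr0 ?expr1;
  rewrite ?[('i : C) ^+ 3]exprS ?h; ring.
Qed.

Lemma charsum d (m : 'I_d -> nat) :
  \sum_(n : {ffun 'I_d -> 'I_4} | first0 n) ('i : C) ^+ (\sum_(j < d) m j * n j)%N =
  \prod_(j < d) (if val j == 0%N then 1 else if (4 %| m j)%N then 4%:R else 0).
Proof.
rewrite big_mkcond /=.
transitivity (\sum_(n : {ffun 'I_d -> 'I_4}) \prod_(j < d)
   (((val j == 0%N) ==> (val (n j) == 0%N))%:R * ('i : C) ^+ (m j * n j))).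
  apply: eq_bigr => n _; rewrite big_split /=. rewrite -expr_sum.
  case: (boolP (first0 n)) => h.
    by rewrite [X in _ = X * _]big1 ?mul1r // => j _; move/forallP: h => /(_ j) ->.
  move/forallPn: h => [j hj].
  by rewrite (bigD1 j) //= (negbTE hj) !mul0r.
rewrite -(bigA_distr_bigA (fun (j : 'I_d) (k : 'I_4) =>
   (((val j == 0%N) ==> (val k == 0%N))%:R * ('i : C) ^+ (m j * k)))) /=.
apply: eq_bigr => j _.
case: eqP => hj.
  rewrite (bigD1 ord0) //= big1 ?addr0; first by rewrite muln0 expr0 mulr1.
  move=> k hk; have -> : (val k == 0%N) = false by apply: negbTE hk.
  by rewrite mul0r.
rewrite -sum4; apply: eq_bigr => k _.
by rewrite mul1r.
Qed.

Lemma prod_cond d (P : 'I_d -> bool) :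
  \prod_(j < d) (if val j == 0%N then 1 else if P j then 4%:R else 0 : C) =
  if [forall j : 'I_d, (val j != 0%N) ==> P j] then (4 ^ d.-1)%:R else 0.
Proof.
case: ifP => h.
  transitivity (\prod_(j < d) (if val j == 0%N then 1 else 4%:R : C)).
    apply: eq_bigr => j _; case: eqP => //= hj.
    by move/forallP: h => /(_ j) /implyP ->//; apply/eqP.
  case: d {P h} => [|d]; first by rewrite big_ord0.
  rewrite big_ord_recl /= mul1r.
  rewrite (eq_bigr (fun _ => 4%:R)); first by rewrite prodr_const card_ord natrX.
  by move=> i _.
move/negbT/forallPn: h => [j]; rewrite negb_imply => /andP[hj hP].
by rewrite (bigD1 j) //= (negbTE hj) (negbTE hP) mul0r.
Qed.
End Aux.

Lemma natb_inj (b1 b2 : bool) : (b1 : nat) = b2 -> b1 = b2.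
Proof. by case: b1; case: b2. Qed.

Lemma eq_of_indic d (x y : 'I_d) :
  (forall j : 'I_d, val j != 0%N -> (j == x) = (j == y)) -> x = y.
Proof.
move=> h; case: (eqVneq (val x) 0%N) => hx.
  case: (eqVneq (val y) 0%N) => hy; first by apply: val_inj; rewrite hx hy.
  by move/(_ y hy): h; rewrite eqxx => /eqP ->.
by move/(_ x hx): h; rewrite eqxx => /esym/eqP.
Qed.

Lemma cond_tr d (r r' : 'I_d) :
  [forall j : 'I_d, (val j != 0%N) ==> (4 %| 3 * (j == r) + 5 * (j == r'))%N] = (r == r').
Proof.
apply/idP/idP.
  move/forallP => h; apply/eqP/eq_of_indic => j hj.
  by move: (implyP (h j) hj); case: (j == r); case: (j == r').
by move/eqP ->; apply/forallP => j; apply/implyP => _; case: (j == r').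
Qed.

Lemma cond_quad d (x y r r' : 'I_d) :
  [forall j : 'I_d, (val j != 0%N) ==>
     (4 %| (j == r) + 5 * (j == x) + 3 * (j == y) + 3 * (j == r'))%N] =
  ((x == y) && (r == r')) || ((x == r') && (y == r)).
Proof.
apply/idP/idP.
  move/forallP => h.
  have h' : forall j : 'I_d, val j != 0%N ->
      ((j == r) + (j == x) = (j == y) + (j == r'))%N.
    move=> j hj; move: (implyP (h j) hj).
    by case: (j == r); case: (j == x); case: (j == y); case: (j == r').
  case: (eqVneq (val x) 0%N) => hx.
    case: (eqVneq (val y) 0%N) => hy.
      have exy : x = y by apply: val_inj; rewrite hx hy.
      subst y; rewrite eqxx /=; apply/orP; left; apply/eqP/eq_of_indic => j hj.
      by move: (h' j hj); case: (j == r); case: (j == x); case: (j == r').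
    have hyx : (y == x) = false.
      by apply/negbTE; apply: contraNneq hy => ->; rewrite hx.
    move: (h' y hy); rewrite eqxx hyx addn0 => hyr.
    have eyr : y = r by apply/eqP; move: hyr; case: (y == r); case: (y == r').
    subst y; rewrite eqxx andbT; apply/orP; right.
    apply/eqP/eq_of_indic => j hj.
    by move: (h' j hj); case: (j == r); case: (j == x); case: (j == r').
  move: (h' x hx); rewrite eqxx => hxe.
  case: (eqVneq x y) => exy.
    subst y; rewrite ?eqxx /=; apply/orP; left; apply/eqP/eq_of_indic => j hj.
    by move: (h' j hj); case: (j == r); case: (j == x); case: (j == r').
  have exr : x = r'.
    by apply/eqP; move: hxe; rewrite (negbTE exy); case: (x == r); case: (x == r').
  subst r'; rewrite eqxx /=; apply/eqP/esym/eq_of_indic => j hj.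
  by move: (h' j hj); case: (j == r); case: (j == x); case: (j == y).
case/orP => /andP[/eqP e1 /eqP e2]; subst; apply/forallP => j; apply/implyP => _.
  by case: (j == r'); case: (j == y).
by case: (j == r); case: (j == r').
Qed.

Section S.
Variable C : numClosedFieldType.
Variable d : nat.
Definition N := (4 ^ d.-1 * d.+1)%N.
Definition K : C := (sqrtC N%:R)^-1.
Definition sc : C := (sqrtC (d.+1)%:R)^-1.

Lemma conjK : K^* = K.
Proof. by rewrite geC0_conj // invr_ge0 sqrtC_ge0 ler0n. Qed.
Lemma conjs : sc^* = sc.
Proof. by rewrite geC0_conj // invr_ge0 sqrtC_ge0 ler0n. Qed.
Lemma KK : K * K * (4 ^ d.-1)%:R = (d.+1)%:R^-1.
Proof.
rewrite /K -invfM -expr2 sqrtCK /N natrM.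
have h1 : (4 ^ d.-1)%:R != 0 :> C by rewrite pnatr_eq0 expn_eq0.
have h2 : (d.+1)%:R != 0 :> C by rewrite pnatr_eq0.
by field; rewrite addrC natr1 h2 h1.
Qed.
Lemma ss : sc * sc = (d.+1)%:R^-1.
Proof. by rewrite /sc -invfM -expr2 sqrtCK. Qed.

Lemma cj k : ('i ^+ k)^* = 'i ^+ (3 * k) :> C.
Proof.
rewrite rmorphXn /= conjCi exprM; congr (_ ^+ _).
by rewrite exprS sqrCi mulrN1.
Qed.
Lemma m1 k : (-1) ^+ k = 'i ^+ (2 * k) :> C.
Proof. by rewrite exprM sqrCi. Qed.

Lemma sum_ind (a : 'I_d) (f : 'I_d -> nat) : (\sum_(j < d) (j == a) * f j)%N = f a.
Proof. by rewrite (bigD1 a) //= eqxx mul1n big1 ?addn0 // => j /negbTE ->. Qed.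
Lemma sum_indc c (a : 'I_d) (f : 'I_d -> nat) : (\sum_(j < d) c * (j == a) * f j)%N = (c * f a)%N.
Proof. by under eq_bigr do rewrite -mulnA; rewrite -big_distrr sum_ind. Qed.

Lemma adjE m p (A : 'M[C]_(m, p)) i j : adjmx A i j = (A j i)^*.
Proof. by rewrite /adjmx !mxE. Qed.

Lemma expq (x y r r' : 'I_d) (f : 'I_d -> nat) :
  (\sum_j ((j == r) + 5 * (j == x) + 3 * (j == y) + 3 * (j == r')) * f j)%N =
  (f r + 5 * f x + 3 * f y + 3 * f r')%N.
Proof.
rewrite (eq_bigr (fun j => (j==r)*f j + 5*(j==x)*f j + 3*(j==y)*f j + 3*(j==r')*f j))%N.
  by rewrite !big_split /= sum_ind !sum_indc.
by move=> j _; ring.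
Qed.

Lemma EvecE (n : {ffun 'I_d -> 'I_4}) a b :
  Evec n a b = K * ('i ^+ n a * ('i ^+ n b)^* * (-1) ^+ n b) :> C.
Proof.
rewrite /Evec !mxE; congr (_ * _).
rewrite (bigD1 b) //= big1 ?addr0; last first.
  by move=> j /negbTE hj; rewrite /sigz !mxE hj mulr0n mulr0.
by rewrite /sigz !mxE eqxx mulr1n big_ord1 adjE !mxE.
Qed.

Lemma term_ch (n : {ffun 'I_d -> 'I_4}) (rho : 'M[C]_d) r r' :
 (Evec n *m rho *m adjmx (Evec n)) r r' = K * K * \sum_x \sum_y rho x y *
   'i ^+ (\sum_j ((j == r) + 5 * (j == x) + 3 * (j == y) + 3 * (j == r')) * n j)%N.
Proof.
rewrite !mxE.
under eq_bigr do rewrite mxE mulr_suml.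
rewrite exchange_big /= mulr_sumr; under [in RHS]eq_bigr do rewrite mulr_sumr.
 apply: eq_bigr => x _; apply: eq_bigr => y _.
rewrite adjE !EvecE.
rewrite expq.
rewrite !rmorphM /= conjCK conjK !cj rmorphXn rmorphN1 !m1 !exprD; ring.
Qed.

Lemma expt (r r' : 'I_d) (f : 'I_d -> nat) :
  (\sum_j (3 * (j == r) + 5 * (j == r')) * f j)%N = (3 * f r + 5 * f r')%N.
Proof.
rewrite (eq_bigr (fun j => 3*(j==r)*f j + 5*(j==r')*f j))%N.
  by rewrite !big_split /= !sum_indc.
by move=> j _; ring.
Qed.

Lemma term_tr (n : {ffun 'I_d -> 'I_4}) r r' :
  (adjmx (Evec n) *m Evec n) r r' =
  K * K * d%:R * 'i ^+ (\sum_j (3 * (j == r) + 5 * (j == r')) * n j)%N.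
Proof.
rewrite mxE expt.
rewrite (eq_bigr (fun _ => K * K * 'i ^+ (3 * n r + 5 * n r'))).
  by rewrite sumr_const card_ord -mulr_natr; ring.
move=> k _; rewrite adjE !EvecE.
rewrite !rmorphM /= conjCK conjK !cj rmorphXn rmorphN1 !m1.
set A := 'i ^+ (3 * n k).
set B := 'i ^+ n k.
have h4 : A * B = 1.
  by rewrite /A /B -exprD addnC -mulSn exprM i4 expr1n.
rewrite -[RHS]mulr1 -h4 !exprD; ring.
Qed.

Lemma sumif1 (F : 'I_d -> C) a : \sum_x (if x == a then F x else 0) = F a.
Proof. by rewrite -big_mkcond big_pred1_eq. Qed.

Lemma sum2if (F : 'I_d -> 'I_d -> C) a b c :
  \sum_x \sum_y F x y * (if (x == a) && (y == b) then c else 0) = F a b * c.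
Proof.
transitivity (\sum_x (if x == a then \sum_y (if y == b then F x y * c else 0) else 0)).
  apply: eq_bigr => x _; case: (x == a) => /=.
    by apply: eq_bigr => y _; case: (y == b) => //=; rewrite mulr0.
  by rewrite big1 // => y _; rewrite mulr0.
by rewrite sumif1 sumif1.
Qed.

Lemma EdiagE (j a b : 'I_d) : Ediag j a b = sc * ((a == j) && (b == j))%:R :> C.
Proof. by rewrite /Ediag !mxE. Qed.

Lemma term_Ed (rho : 'M[C]_d) (j r r' : 'I_d) :
  (Ediag j *m rho *m adjmx (Ediag j)) r r' = sc * sc * ((r == j) && (r' == j))%:R * rho j j.
Proof.
rewrite mxE.
under eq_bigr do rewrite mxE adjE !EdiagE mulr_suml.
rewrite exchange_big /=.
under eq_bigr do under eq_bigr do rewrite !EdiagE.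
rewrite (bigD1 j) //= [X in _ + X]big1 ?addr0; last first.
  by move=> x /negbTE hx; rewrite big1 // => y _; rewrite hx andbF mulr0 !mul0r.
rewrite (bigD1 j) //= big1 ?addr0; last first.
  by move=> x /negbTE hx; rewrite hx andbF mulr0 rmorph0 mulr0.
rewrite !eqxx !andbT rmorphM /= conjs rmorph_nat.
by case: (r == j); case: (r' == j); rewrite /= ?mulr0 ?mul0r ?mulr1 ?mul1r //; ring.
Qed.

Lemma sumEd_ch (rho : 'M[C]_d) r r' :
  (\sum_(j < d) Ediag j *m rho *m adjmx (Ediag j)) r r' =
  (d.+1)%:R^-1 * (r == r')%:R * rho r r.
Proof.
rewrite summxE; under eq_bigr do rewrite term_Ed.
rewrite (bigD1 r) //= big1 ?addr0; last first.
  by move=> j /negbTE hj; rewrite (eq_sym r) hj /= mulr0 mul0r.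
by rewrite eqxx /= ss (eq_sym r').
Qed.

Lemma term_Ed_tr (j r r' : 'I_d) :
  (adjmx (Ediag j) *m Ediag j) r r' = sc * sc * ((r == j) && (r' == j))%:R :> C.
Proof.
rewrite mxE (bigD1 j) //= big1 ?addr0; last first.
  by move=> x /negbTE hx; rewrite adjE !EdiagE hx /= !mulr0.
rewrite adjE !EdiagE !eqxx /= rmorphM /= conjs rmorph_nat.
by case: (r == j); case: (r' == j); rewrite /= ?mulr0 ?mul0r ?mulr1 ?mul1r.
Qed.

Lemma sumEd_tr (r r' : 'I_d) :
  (\sum_(j < d) adjmx (Ediag j) *m Ediag j) r r' = (d.+1)%:R^-1 * (r == r')%:R :> C.
Proof.
rewrite summxE; under eq_bigr do rewrite term_Ed_tr.
rewrite (bigD1 r) //= big1 ?addr0; last first.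
  by move=> j /negbTE hj; rewrite (eq_sym r) hj /= mulr0.
by rewrite eqxx /= ss (eq_sym r').
Qed.

Lemma sumdiag (F : 'I_d -> 'I_d -> C) c :
  \sum_x \sum_y F x y * (if x == y then c else 0) = \sum_x F x x * c.
Proof.
apply: eq_bigr => x _; rewrite (bigD1 x) //= eqxx big1 ?addr0 // => y hy.
by rewrite eq_sym (negbTE hy) mulr0.
Qed.

Lemma sumEv_ch (rho : 'M[C]_d) r r' :
 (\sum_(n : {ffun 'I_d -> 'I_4} | first0 n) Evec n *m rho *m adjmx (Evec n)) r r' =
 (d.+1)%:R^-1 * (if r == r' then \tr rho else rho r' r).
Proof.
rewrite summxE.
under eq_bigr do rewrite term_ch.
rewrite -mulr_sumr exchange_big /=.
under eq_bigr do rewrite exchange_big /=.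
under eq_bigr do under eq_bigr do rewrite -mulr_sumr charsum prod_cond cond_quad.
have KK' : forall t, K * K * (t * (4 ^ d.-1)%:R) = (d.+1)%:R^-1 * t.
  by move=> t; rewrite [t * _]mulrC mulrA KK.
case: (eqVneq r r') => [<-|hr].
  have e : forall x y : 'I_d, (x == y) && true || (x == r) && (y == r) = (x == y).
    move=> x y; rewrite andbT; apply/idP/idP => [/orP[//|/andP[/eqP-> /eqP->]//]|->//].
  rewrite (eq_bigr (fun x => \sum_y rho x y * (if x == y then (4 ^ d.-1)%:R else 0))); last first.
    by move=> x _; apply: eq_bigr => y _; rewrite e.
  by rewrite sumdiag /mxtrace -mulr_suml KK'.
rewrite (eq_bigr (fun x => \sum_y rho x y * (if (x == r') && (y == r) then (4 ^ d.-1)%:R else 0))); last first.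
  by move=> x _; apply: eq_bigr => y _; rewrite andbF.
by rewrite sum2if KK'.
Qed.

Lemma sumEv_tr r r' :
 (\sum_(n : {ffun 'I_d -> 'I_4} | first0 n) adjmx (Evec n) *m Evec n) r r' =
 d%:R / (d.+1)%:R * (r == r')%:R :> C.
Proof.
rewrite summxE.
under eq_bigr do rewrite term_tr.
rewrite -mulr_sumr charsum prod_cond cond_tr.
case: (r == r'); last by rewrite !mulr0.
by rewrite mulr1 mulrAC KK mulrC.
Qed.

Lemma sum2R (F : 'I_d -> 'I_d -> C) a b :
  \sum_x \sum_y F x y * ((x == a) && (y == b))%:R = F a b.
Proof.
rewrite -[RHS]mulr1 -(sum2if F a b 1); apply: eq_bigr => x _; apply: eq_bigr => y _.
by case: (_ && _).
Qed.

Lemma sum2L (G : 'I_d -> 'I_d -> C) p q :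
  \sum_a \sum_b ((a == p) && (b == q))%:R * G a b = G p q.
Proof.
rewrite -(sum2R G p q); apply: eq_bigr => x _; apply: eq_bigr => y _.
by rewrite mulrC.
Qed.

Lemma sum2L2 (G : 'I_d -> 'I_d -> C) p q p' q' :
  \sum_a \sum_b (((a == p) && (b == q)) + ((a == p') && (b == q')))%:R * G a b
  = G p q + G p' q'.
Proof.
rewrite -(sum2L G p q) -(sum2L G p' q') -big_split /=; apply: eq_bigr => x _.
rewrite -big_split /=; apply: eq_bigr => y _.
by rewrite natrD mulrDl.
Qed.

Lemma symc_ip (l r l' r' : 'I_d) :
  \sum_a \sum_b symc l r a b * symc l' r' a b =
  ((l == l') && (r == r'))%:R + ((l == r') && (l' == r) && (l != r))%:R :> C.
Proof.
have hs : sqrtC 2%:R * sqrtC 2%:R = 2%:R :> C by rewrite -expr2 sqrtCK.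
have hs0 : sqrtC 2%:R != 0 :> C by rewrite sqrtC_eq0 pnatr_eq0.
rewrite /symc.
case: (eqVneq l r) => [<-|hlr]; case: (eqVneq l' r') => [<-|hlr'].
- rewrite sum2L; case: (eqVneq l l') => //= _; by rewrite ?addr0.
- rewrite (eq_bigr (fun a => \sum_b ((a == l) && (b == l))%:R *
       ((((a == l') && (b == r')) + ((a == r') && (b == l')))%:R / sqrtC 2%:R))); last first.
    by move=> a _; apply: eq_bigr.
  rewrite sum2L.
  have e1 : (l == l') && (l == r') = false.
    by apply/negbTE; apply: contra hlr' => /andP[/eqP<- /eqP<-].
  by rewrite (andbC (l == r')) e1 /= andbF mul0r addr0.
- rewrite (eq_bigr (fun a => \sum_b ((a == l') && (b == l'))%:R *
       ((((a == l) && (b == r)) + ((a == r) && (b == l)))%:R / sqrtC 2%:R))); last first.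
    by move=> a _; apply: eq_bigr => b _; rewrite mulrC.
  rewrite sum2L.
  have e1 : (l' == l) && (l' == r) = false.
    by apply/negbTE; apply: contra hlr => /andP[/eqP<- /eqP<-].
  rewrite (andbC (l' == r)) e1 /= mul0r andbT.
  by rewrite (eq_sym l l') (eq_sym r l') e1 addr0.
- rewrite (eq_bigr (fun a => \sum_b (((a == l) && (b == r)) + ((a == r) && (b == l)))%:R *
       ((((a == l') && (b == r')) + ((a == r') && (b == l')))%:R / (sqrtC 2%:R * sqrtC 2%:R)))); last first.
    by move=> a _; apply: eq_bigr => b _; rewrite mulf_div mulrA.
  rewrite sum2L2 hs /= andbT (eq_sym l' r).
  case: (l == l'); case: (r == r'); case: (l == r'); case: (r == l');
    rewrite /= ?addr0 ?add0r; field => //.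
Qed.

Lemma sumdiagR (F : 'I_d -> 'I_d -> C) :
  \sum_x \sum_y F x y * (x == y)%:R = \sum_x F x x.
Proof.
apply: eq_bigr => x _; rewrite (bigD1 x) //= eqxx mulr1 big1 ?addr0 // => y hy.
by rewrite eq_sym (negbTE hy) mulr0.
Qed.

Definition cc (l r : 'I_d) : C := sqrtC ((1 + (l == r))%:R / (d.+1)%:R).

Lemma cc_ge0 l r : 0 <= cc l r.
Proof. by rewrite /cc sqrtC_ge0 divr_ge0 // ler0n. Qed.

Lemma symc_ge0 (l r a b : 'I_d) : 0 <= symc l r a b :> C.
Proof. by rewrite /symc; case: ifP => _; rewrite ?ler0n // divr_ge0 // ?ler0n // sqrtC_ge0 ler0n. Qed.

Lemma inner_ab (l l' r r' : 'I_d) (x : C) :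
  \sum_a \sum_b cloner_iso l a b r * x * (cloner_iso l' a b r')^* =
  cc l r * cc l' r' * x *
  (((l == l') && (r == r'))%:R + ((l == r') && (l' == r) && (l != r))%:R).
Proof.
rewrite -symc_ip mulr_sumr; apply: eq_bigr => a _.
rewrite mulr_sumr; apply: eq_bigr => b _.
rewrite /cloner_iso rmorphM /= !geC0_conj ?symc_ge0 //; last first.
  by rewrite sqrtC_ge0 divr_ge0 // ler0n.
rewrite -/(cc l r) -/(cc l' r'); ring.
Qed.

Lemma ccsq (l r : 'I_d) : cc l r * cc l r = (1 + (l == r))%:R / (d.+1)%:R.
Proof. by rewrite -expr2 sqrtCK. Qed.

Lemma compl_entry (rho : 'M[C]_d) r r' :
  cloner_compl rho r r' = (d.+1)%:R^-1 * ((r == r')%:R * \tr rho + rho r' r).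
Proof.
rewrite /cloner_compl mxE.
under eq_bigr do rewrite exchange_big /=.
under eq_bigr do under eq_bigr do rewrite exchange_big /=.
rewrite exchange_big /=.
under eq_bigr do rewrite exchange_big /=.
under eq_bigr do under eq_bigr do rewrite inner_ab.
case: (eqVneq r r') => [<-|hr].
  rewrite (eq_bigr (fun l => \sum_l' cc l r * cc l' r * rho l l' * (l == l')%:R)); last first.
    move=> l _; apply: eq_bigr => l' _; congr (_ * _).
    by rewrite andbT; case: (eqVneq l r) => [->|]; rewrite ?andbF ?addr0.
  rewrite sumdiagR.
  under eq_bigr do rewrite ccsq natrD mulrDl mulrDl.
  rewrite big_split /= mulr1n mul1r /mxtrace mulrDr; congr (_ + _).
    by rewrite -mulr_sumr mul1r.
  rewrite (bigD1 r) //= eqxx big1 ?addr0; first by rewrite mulr1n !mul1r.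
  by move=> l /negbTE ->; rewrite mulr0n !mul0r.
rewrite mulr0n mul0r add0r.
rewrite (eq_bigr (fun l => \sum_l' cc l r * cc l' r' * rho l l' * ((l == r') && (l' == r))%:R)); last first.
  move=> l _; apply: eq_bigr => l' _; congr (_ * _).
  rewrite andbF add0r; case: (eqVneq l r') => [->|]; last by rewrite /=.
  by rewrite (eq_sym r' r) hr andbT.
rewrite sum2R.
have e : cc r' r = cc r r'.
  by rewrite /cc eq_sym.
by rewrite e ccsq (negbTE hr) addn0 mul1r.
Qed.


Lemma K_neq0 : K != 0.
Proof. by rewrite /K invr_eq0 sqrtC_eq0 pnatr_eq0 /N muln_eq0 expn_eq0. Qed.

Lemma Evec_diag_neq0 (n : {ffun 'I_d -> 'I_4}) a : @Evec C d n a a != 0.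
Proof.
rewrite EvecE mulf_neq0 ?K_neq0 // cj -exprD -mulSn exprM i4 expr1n mul1r.
by rewrite expf_neq0 // oppr_eq0 oner_eq0.
Qed.

Lemma rank_Ed (j : 'I_d) : \rank (@Ediag C d j) = 1%N.
Proof. by rewrite /Ediag mxrank_scale_nz ?mxrank_delta // invr_eq0 sqrtC_eq0 pnatr_eq0. Qed.

Lemma rank_Ev (n : {ffun 'I_d -> 'I_4}) : (0 < d)%N -> \rank (@Evec C d n) = 1%N.
Proof.
move=> hd0; apply/eqP; rewrite eqn_leq; apply/andP; split.
  rewrite /Evec (leq_trans (mxrank_scale _ _)) // (leq_trans (mxrankM_maxl _ _)) //.
  by rewrite (leq_trans (mxrankM_maxl _ _)) // rank_leq_col.
rewrite lt0n mxrank_eq0; apply/eqP => h.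
have := Evec_diag_neq0 n (Ordinal hd0).
by rewrite h mxE eqxx.
Qed.
End S.

Theorem lemma2 (C : numClosedFieldType) (d : nat) (hd : (2 <= d)%N) :
  (forall rho : 'M[C]_d,
     cloner_compl rho =
       \sum_(j < d) Ediag j *m rho *m adjmx (Ediag j)
     + \sum_(n : {ffun 'I_d -> 'I_4} | first0 n) Evec n *m rho *m adjmx (Evec n))
  /\ \sum_(j < d) adjmx (Ediag j) *m Ediag j
     + \sum_(n : {ffun 'I_d -> 'I_4} | first0 n) adjmx (Evec n) *m Evec n
     = (1%:M : 'M[C]_d)
  /\ (forall j : 'I_d, \rank (@Ediag C d j) = 1%N)
  /\ (forall n : {ffun 'I_d -> 'I_4}, first0 n -> \rank (@Evec C d n) = 1%N).
Proof.
have hD : (d.+1)%:R != 0 :> C by rewrite pnatr_eq0.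
split.
  move=> rho; apply/matrixP => r r'.
  rewrite compl_entry mxE sumEd_ch sumEv_ch.
  by case: (eqVneq r r') => [<-|h]; rewrite ?mulr1n ?mulr0n; ring.
split.
  apply/matrixP => r r'; rewrite mxE sumEd_tr sumEv_tr !mxE.
  case: (r == r'); rewrite ?mulr1n ?mulr0n ?mulr1 ?mulr0 ?addr0 //.
  by field; rewrite addrC natr1.
split; first exact: rank_Ed.
move=> n _; apply: rank_Ev.
exact: leq_trans hd.
Qed.
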